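(* Let $n\ge2$ and let $G$ be a finite simple graph with $n$ vertices. Then $s(\{\rho(B)\}*\{I(G)\})\subseteq 2\mathbb{Z}$ for every connected bipartite graph $B$ with $n$ vertices if and only if every vertex of $G$ has even degree (i.e. every connected component of $G$ is Eulerian). In the notation of orthogonality classes: $I^{-1}\big(\rho(\{\text{connected bipartite graphs on } n \text{ vertices}\})^{\perp_{\mathscr P(2\mathbb Z)}}\big)$ is exactly the set of graphs on $n$ vertices all of whose components are Eulerian.
   Context: Take $R=\mathbb{Z}$. An $R$-weighted complete graph $K$ is a finite vertex set with a weight $v_K(e)\in R$ on every 2-subset $e$. For $H,G'$ with equal vertex counts and a bijection $f:V(H)\to V(G')$, $H*_fG'$ has vertex set $V(H)$ and weights $v_H(\{x,y\})v_{G'}(\{f(x),f(y)\})$; $H*G'=\{H*_fG': f \text{ bijection}\}$. $s(K)=\sum_e v_K(e)$, $s(\mathscr K)=\{s(K):K\in\mathscr K\}$. For a simple graph $G$, $I(G)$ has weight $1$ on edges and $0$ on non-edges; for connected $B$, $\rho(B)$ has weight $\rho_B(x,y)$ (graph distance). For a set $\mathscr H$ of weighted complete graphs on $n$ vertices and a family $\mathscr A$ of subsets of $\mathbb Z$, $\mathscr H^{\perp_{\mathscr A}}$ is the class of weighted complete graphs $X$ on $n$ vertices with $s(H*X)\in\mathscr A$ for all $H\in\mathscr H$; $\mathscr P(2\mathbb Z)$ is the family of all subsets of the even integers; $I^{-1}$ of a class means the simple graphs $G$ with $I(G)$ in that class. *)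

(* Defs.v *)
From mathcomp Require Import all_boot all_order.
From mathcomp Require Import fingroup perm.
Set Implicit Arguments. Unset Strict Implicit. Unset Printing Implicit Defensive.

Definition simple_graph (T : finType) (e : rel T) : Prop :=
  symmetric e /\ irreflexive e.

Definition graph_connected (T : finType) (e : rel T) : Prop :=
  forall x y : T, connect e x y.

Definition bipartite (T : finType) (e : rel T) : Prop :=
  exists c : T -> bool, forall x y, e x y -> c x != c y.

Fixpoint walk (T : finType) (e : rel T) (k : nat) (x y : T) : bool :=
  if k is k'.+1 then [exists z, e x z && walk e k' z y] else x == y.

(* Graph distance: the least k with a walk of length k from x to y
   (searching k = 0 .. #|T|-1; for connected graphs this is the exact
   distance, since any distance is < #|T|). *)
Definition gdist (T : finType) (e : rel T) (x y : T) : nat :=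
  find (fun k => walk e k x y) (iota 0 #|T|).

Definition degree (T : finType) (e : rel T) (x : T) : nat :=
  #|[set y | e x y]|.

(* s(rho(B) *_f I(G)) : sum over 2-subsets {i,j} (i<j) of
   rho_B(i,j) * v_{I(G)}({f i, f j}). *)
Definition s_rho_I (n : nat) (B G : rel 'I_n) (f : {perm 'I_n}) : nat :=
  \sum_(i < n) \sum_(j < n | i < j) gdist B i j * (G (f i) (f j) : nat).

(* Main.v *)
Require Import Defs.
From mathcomp Require Import all_boot all_order.
From mathcomp Require Import fingroup perm.

Lemma tri n (K : 'I_n -> 'I_n -> nat) :
 \sum_(i < n) \sum_(j < n) K i j = \sum_(i < n) \sum_(j < n | i < j) K i j + \sum_(i < n) \sum_(j < n | i < j) K j i + \sum_(i < n) K i i.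
Proof.
have e1 : forall i, \sum_(j < n) K i j = \sum_(j < n | i < j) K i j + \sum_(j < n | j < i) K i j + K i i.
  move=> i; rewrite (bigID (fun j : 'I_n => i < j)) /= -addnA; congr (_ + _).
  rewrite (bigID (fun j : 'I_n => j < i)) /=; congr (_ + _).
    by apply: eq_bigl => j; case: ltngtP.
  apply: big_pred1 => j /=; rewrite -(inj_eq val_inj) /=; by case: ltngtP.
rewrite (eq_bigr _ (fun i _ => e1 i)) !big_split /=; congr (_ + _ + _).
rewrite (eq_bigr (fun i : 'I_n => \sum_(j < n) (if j < i then K i j else 0))); last first.
  by move=> i _; rewrite big_mkcond.
rewrite exchange_big /=. apply: eq_bigr => i _; by rewrite [RHS]big_mkcond; apply: eq_bigr.
Qed.

Lemma deg_sum n (G : rel 'I_n) (f : {perm 'I_n}) i :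
  \sum_(j < n) (G (f i) (f j) : nat) = degree G (f i).
Proof.
rewrite /degree -sum1_card [RHS]big_mkcond [RHS](reindex_inj (@perm_inj _ f)) /=.
apply: eq_bigr => j _; rewrite inE; by case: G.
Qed.

Lemma parity_main n (B G : rel 'I_n) (c : 'I_n -> bool) (f : {perm 'I_n}) :
  symmetric G -> irreflexive G -> (forall i j, odd (gdist B i j) = (c i != c j)) ->
  odd (s_rho_I B G f) = odd (\sum_(i < n) c i * degree G (f i)).
Proof.
move=> sG iG hd.
pose G' := fun i j => G (f i) (f j).
pose K i j := (c i && ~~ c j && G' i j : nat).
pose L i j := (c i && c j && G' i j : nat).
have s1 : odd (s_rho_I B G f) = odd (\sum_(i < n) \sum_(j < n | i < j) (K i j + K j i)).
  rewrite /s_rho_I; apply: (big_ind2 (fun a b => odd a = odd b)) => //.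
    by move=> a b a' b' h1 h2; rewrite !oddD h1 h2.
  move=> i _; apply: (big_ind2 (fun a b => odd a = odd b)) => //.
    by move=> a b a' b' h1 h2; rewrite !oddD h1 h2.
  move=> j _; rewrite oddM hd oddD !oddb /K /G' (sG (f j)).
  by case: (c i); case: (c j); case: (G (f i) (f j)).
have s2 : \sum_(i < n) \sum_(j < n | i < j) (K i j + K j i) = \sum_(i < n) \sum_(j < n) K i j.
  rewrite [RHS]tri (big1 _ _ (fun i => K i i)) ?addn0; last first.
    by move=> i _; rewrite /K; case: (c i).
  by rewrite -big_split; apply: eq_bigr => i _; rewrite big_split.
have s3 : \sum_(i < n) \sum_(j < n) K i j + \sum_(i < n) \sum_(j < n) L i j = \sum_(i < n) c i * degree G (f i).
  rewrite -big_split; apply: eq_bigr => i _; rewrite -big_split /=.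
  rewrite -(@deg_sum n G f i) big_distrr; apply: eq_bigr => j _; rewrite /K /L /G'.
  by case: (c i); case: (c j); case: (G (f i) (f j)).
have s4 : \sum_(i < n) \sum_(j < n) L i j = (\sum_(i < n) \sum_(j < n | i < j) L i j).*2.
  rewrite tri (big1 _ _ (fun i => L i i)) ?addn0; last first.
    by move=> i _; rewrite /L /G' iG andbF.
  rewrite -addnn; congr (_ + _); apply: eq_bigr => i _; apply: eq_bigr => j _.
  by rewrite /L /G' sG; case: (c i); case: (c j).
by rewrite s1 s2 -s3 s4 oddD odd_double addbF.
Qed.
Lemma walk_par (T : finType) (e : rel T) (c : T -> bool) :
  (forall x y, e x y -> c x != c y) ->
  forall k x y, walk e k x y -> odd k = (c x != c y).
Proof.
move=> hc; elim=> [|k IH] x y /=.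
  by move/eqP->; rewrite eqxx.
case/existsP=> z /andP[exz wz]; rewrite (IH z y wz).
move: (hc _ _ exz); by case: (c x); case: (c y); case: (c z).
Qed.

Lemma path_walk (T : finType) (e : rel T) (p : seq T) (x : T) :
  path e x p -> walk e (size p) x (last x p).
Proof.
elim: p x => [|z p IH] x /=; first by rewrite eqxx.
case/andP=> exz pz; apply/existsP; exists z; by rewrite exz IH.
Qed.

Lemma gdist_par (T : finType) (e : rel T) (c : T -> bool) :
  (forall x y, e x y -> c x != c y) -> (forall x y, connect e x y) ->
  forall x y, odd (gdist e x y) = (c x != c y).
Proof.
move=> hc hcon x y.
have [p px py] := connectP (hcon x y).
rewrite py; case: (shortenP px) => p' pp' up' _.
set y' := last x p'.
have hw : walk e (size p') x y' by apply: path_walk.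
have hs : size p' < #|T|.
  move/card_uniqP: up' => /= <-; exact: max_card.
have hh : has (fun k => walk e k x y') (iota 0 #|T|).
  apply/hasP; exists (size p') => //; by rewrite mem_iota.
have hw2 : walk e (gdist e x y') x y'.
  rewrite /gdist; have := nth_find 0 hh; rewrite nth_iota //; move: hh; rewrite has_find size_iota //.
exact: (@walk_par T e c hc _ _ _ hw2).
Qed.

Theorem mainTheorem20 (n : nat) (G : rel 'I_n) :
  2 <= n -> simple_graph G ->
  ((forall B : rel 'I_n, simple_graph B -> graph_connected B -> bipartite B ->
      forall f : {perm 'I_n}, ~~ odd (s_rho_I B G f))
   <-> (forall x : 'I_n, ~~ odd (degree G x))).
Proof.
move=> n2 [sG iG]; split.
  move=> H x; apply/negP => hodd.
  pose B := fun i j : 'I_n => (i == x) != (j == x).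
  have hbip : forall i j, B i j -> (i == x) != (j == x) by [].
  have hcx : forall y, connect B y x.
    move=> y; case: (eqVneq y x) => [->|ne]; first exact: connect0.
    by apply: connect1; rewrite /B eqxx (negbTE ne).
  have hxc : forall y, connect B x y.
    move=> y; case: (eqVneq y x) => [->|ne]; first exact: connect0.
    by apply: connect1; rewrite /B eqxx (negbTE ne).
  have hcon : graph_connected B by move=> y z; exact: connect_trans (hcx y) (hxc z).
  have hsB : simple_graph B.
    by split; [move=> i j; rewrite /B; case: (i == x); case: (j == x) | move=> i; rewrite /B; case: (i == x)].
  have := H B hsB hcon (ex_intro _ _ hbip) 1%g.
  rewrite (@parity_main n B G (fun i => i == x) 1%g sG iG (@gdist_par _ B _ hbip hcon)).
  rewrite (bigD1 x) //= big1 ?addn0 ?eqxx ?perm1 ?mul1n ?hodd //.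
  by move=> i /negbTE ->.
move=> H B [sB iB] cB [c hc] f.
rewrite (@parity_main n B G c f sG iG (@gdist_par _ B c hc cB)).
apply: (big_ind (fun a => ~~ odd a)) => //.
  by move=> a b ha hb; rewrite oddD (negbTE ha) (negbTE hb).
by move=> i _; rewrite oddM (negbTE (H (f i))) andbF.
Qed.
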